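(* Let $\{e_1,e_2,e_3\}$ be the standard basis of $\mathbb{R}^3$, let $\eta\in(0,\pi)$, $l>0$, and set $x_1=0$, $x_2=e_1$, $x_4=l(\cos\eta\,e_1+\sin\eta\,e_2)$, $x_3=x_2+x_4-x_1$. For $\lambda_1,\lambda_2\in(0,1)$ let $x_0=x_1+\lambda_1(x_2-x_1)+\lambda_2(x_4-x_1)$. Then the (Kawasaki) condition $\angle x_1x_0x_4+\angle x_2x_0x_3=\pi$ holds if and only if $$(\lambda_2-1)\lambda_2\, l^2-(\lambda_1-1)\lambda_1=0 .$$
   Context: $\angle abc\in[0,\pi]$ denotes the (unsigned) angle at the vertex $b$ between the segments $ba$ and $bc$, i.e. $\arccos\big(\frac{(a-b)\cdot(c-b)}{|a-b||c-b|}\big)$. The point $x_0$ lies in the interior of the parallelogram with corners $x_1,x_2,x_3,x_4$. *)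

(* Defs.v *)
From Stdlib Require Import Reals.
Open Scope R_scope.

Record R3 := mkR3 { px : R; py : R; pz : R }.

Definition vadd (a b : R3) : R3 := mkR3 (px a + px b) (py a + py b) (pz a + pz b).
Definition vsub (a b : R3) : R3 := mkR3 (px a - px b) (py a - py b) (pz a - pz b).
Definition vscale (k : R) (a : R3) : R3 := mkR3 (k * px a) (k * py a) (k * pz a).
Definition dot (a b : R3) : R := px a * px b + py a * py b + pz a * pz b.
Definition vnorm (a : R3) : R := sqrt (dot a a).

Definition e1 : R3 := mkR3 1 0 0.
Definition e2 : R3 := mkR3 0 1 0.
Definition e3 : R3 := mkR3 0 0 1.
Definition origin : R3 := mkR3 0 0 0.

Definition angle (a b c : R3) : R :=
  acos (dot (vsub a b) (vsub c b) / (vnorm (vsub a b) * vnorm (vsub c b))).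

(* Main.v *)
Require Import Defs.
From Stdlib Require Import Reals Lra Psatz.
Open Scope R_scope.

Definition cr (a b : R3) : R :=
  (py a * pz b - pz a * py b)^2 + (pz a * px b - px a * pz b)^2 + (px a * py b - py a * px b)^2.

Lemma angle_eq (a b c : R3) :
  angle a b c = acos (dot (vsub a b) (vsub c b) /
     sqrt (dot (vsub a b) (vsub c b) ^ 2 + cr (vsub a b) (vsub c b))).
Proof.
  unfold angle, vnorm. rewrite <- sqrt_mult.
  - f_equal. f_equal. f_equal. unfold dot, cr. ring.
  - unfold dot; nra.
  - unfold dot; nra.
Qed.

Lemma acos_sum (A B : R) : -1 <= A <= 1 -> -1 <= B <= 1 ->
  (acos A + acos B = PI <-> A = - B).
Proof.
  intros HA HB; split; intro H.
  - assert (acos A = PI - acos B) by lra.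
    rewrite <- (cos_acos A HA), H0, cos_minus, cos_PI, sin_PI, cos_acos by auto. ring.
  - subst. rewrite acos_opp. ring.
Qed.

Lemma bound1 p K : 0 < K -> -1 <= p / sqrt (p^2 + K^2) <= 1.
Proof.
  intros HK.
  assert (Hs : 0 < sqrt (p^2 + K^2)) by (apply sqrt_lt_R0; nra).
  assert (Habs : Rabs p < sqrt (p^2 + K^2)).
  { rewrite <- sqrt_Rsqr_abs. apply sqrt_lt_1_alt. split. apply Rle_0_sqr.
    unfold Rsqr; nra. }
  split.
  - apply Rmult_le_reg_r with (sqrt (p^2+K^2)); auto.
    unfold Rdiv; rewrite Rmult_assoc, Rinv_l by lra.
    pose proof (Rabs_def2 p _ Habs). lra.
  - apply Rmult_le_reg_r with (sqrt (p^2+K^2)); auto.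
    unfold Rdiv; rewrite Rmult_assoc, Rinv_l by lra.
    pose proof (Rabs_def2 p _ Habs). lra.
Qed.

Lemma keyalg p q K1 K2 : 0 < K1 -> 0 < K2 ->
  (p / sqrt (p^2 + K1^2) = - (q / sqrt (q^2 + K2^2)) <-> K2 * p + K1 * q = 0).
Proof.
  intros H1 H2.
  set (N1 := sqrt (p^2 + K1^2)). set (N2 := sqrt (q^2 + K2^2)).
  assert (HN1 : 0 < N1) by (apply sqrt_lt_R0; nra).
  assert (HN2 : 0 < N2) by (apply sqrt_lt_R0; nra).
  assert (E1 : N1 * N1 = p^2 + K1^2) by (apply sqrt_sqrt; nra).
  assert (E2 : N2 * N2 = q^2 + K2^2) by (apply sqrt_sqrt; nra).
  split; intro H.
  - assert (H' : p * N2 = - q * N1).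
    { apply (f_equal (fun t => t * N1 * N2)) in H.
      field_simplify in H; lra. }
    assert (Hsq : (p*K2)^2 = (q*K1)^2).
    { assert ((p*N2)^2 = (q*N1)^2) by (rewrite H'; ring). nra. }
    assert (Hf : (p*K2 - q*K1) * (p*K2 + q*K1) = 0) by nra.
    apply Rmult_integral in Hf. destruct Hf as [Hf|Hf]; [|lra].
    (* p K2 = q K1 : same sign, but p N2 = - q N1: opposite sign *)
    assert (p * q >= 0).
    { assert (E : (p * q) * (K1 * K2) = (q*K1)^2) by nra.
      assert (0 < K1 * K2) by nra.
      destruct (Rle_or_lt 0 (p*q)); [lra|].
      assert ((p*q)*(K1*K2) < 0) by nra. nra. }
    assert (p * q <= 0).
    { assert (E : (p*q)*(N2*N1) = -(q*N1)^2) by (replace ((p*q)*(N2*N1)) with ((p*N2)*(q*N1)) by ring; rewrite H'; ring).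
      assert (0 < N2 * N1) by nra.
      destruct (Rle_or_lt (p*q) 0); [lra|].
      assert ((p*q)*(N2*N1) > 0) by nra. nra. }
    assert (Hpq : p * q = 0) by lra.
    destruct (Rmult_integral _ _ Hpq) as [Hp|Hq]; subst; nra.
  - assert (Hp : p = - (K1 * q) / K2).
    { apply Rmult_eq_reg_r with K2; [|lra].
      unfold Rdiv. rewrite Rmult_assoc, Rinv_l; lra. }
    assert (HN : N1 = K1 / K2 * N2).
    { unfold N1. rewrite <- (sqrt_Rsqr (K1/K2*N2)).
      + f_equal. unfold Rsqr. rewrite Hp.
        replace (K1 / K2 * N2 * (K1 / K2 * N2)) with ((K1/K2)^2 * (N2 * N2)) by ring.
        rewrite E2. field. lra.
      + apply Rmult_le_pos; [apply Rlt_le, Rdiv_lt_0_compat|]; lra. }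
    rewrite HN, Hp. field. lra.
Qed.

Theorem mainTheorem1 (eta l lam1 lam2 : R)
  (heta : 0 < eta < PI) (hl : 0 < l)
  (hlam1 : 0 < lam1 < 1) (hlam2 : 0 < lam2 < 1) :
  let x1 := origin in
  let x2 := e1 in
  let x4 := vscale l (vadd (vscale (cos eta) e1) (vscale (sin eta) e2)) in
  let x3 := vsub (vadd x2 x4) x1 in
  let x0 := vadd x1 (vadd (vscale lam1 (vsub x2 x1)) (vscale lam2 (vsub x4 x1))) in
  (angle x1 x0 x4 + angle x2 x0 x3 = PI <->
   (lam2 - 1) * lam2 * l ^ 2 - (lam1 - 1) * lam1 = 0).
Proof.
  intros x1 x2 x4 x3 x0.
  assert (hs : 0 < sin eta) by (apply sin_gt_0; lra).
  set (L := l * sin eta).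
  assert (hL : 0 < L) by (unfold L; nra).
  rewrite !angle_eq.
  assert (C1 : cr (vsub x1 x0) (vsub x4 x0) = (lam1 * L)^2).
  { unfold cr, x1, x0, x4, x2, L, origin, e1, e2, vsub, vadd, vscale; simpl. ring. }
  assert (C2 : cr (vsub x2 x0) (vsub x3 x0) = ((1 - lam1) * L)^2).
  { unfold cr, x3, x1, x0, x4, x2, L, origin, e1, e2, vsub, vadd, vscale; simpl. ring. }
  rewrite C1, C2.
  rewrite acos_sum by (apply bound1; nra).
  rewrite keyalg by nra.
  assert (D : (1 - lam1) * L * dot (vsub x1 x0) (vsub x4 x0) + lam1 * L * dot (vsub x2 x0) (vsub x3 x0)
     = L * (lam1 * (1 - lam1) - lam2 * (1 - lam2) * l^2 * (sin eta ^2 + cos eta ^2))).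
  { unfold dot, x3, x1, x0, x4, x2, L, origin, e1, e2, vsub, vadd, vscale; simpl. ring. }
  rewrite D. rewrite <- !Rsqr_pow2, sin2_cos2, Rmult_1_r.
  unfold Rsqr.
  replace (lam1 * (1 - lam1) - lam2 * (1 - lam2) * (l * l)) with
    (- ((lam2 - 1) * lam2 * (l * l) - (lam1 - 1) * lam1) * -1) by ring.
  split; intro H.
  - apply Rmult_integral in H. destruct H; [lra|]. lra.
  - rewrite H; ring.
Qed.
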